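(* For $n\ge3$ define the graphon $W_n$ on $[0,1]^2$ by $W_n(x,y)=1$ if ($x\le\frac12-\frac1n$ and $y\ge\frac12+\frac1n$), or ($x\ge\frac12+\frac1n$ and $y\le\frac12-\frac1n$), or ($x,y\in[\frac12-e^{-n}-\frac1n,\ \frac12+e^{-n}+\frac1n]$), and $W_n(x,y)=0$ otherwise. Let $W(x,y)=1$ if exactly one of $x,y$ lies in $[0,\frac12]$ and $W(x,y)=0$ otherwise. Then each $W_n$ is connected, $\|W_n-W\|_{L^1([0,1]^2)}\to0$, $h_{W_n}\to0$, but $h_W=\frac12$. In particular $h_{W_n}\not\to h_W$.
   Context: A graphon is a measurable symmetric $W:[0,1]^2\to[0,1]$. For measurable $A,B\subseteq[0,1]$, $e_W(A,B)=\int_{A\times B}W$, $\mathrm{vol}_W(A)=e_W(A,[0,1])$. $W$ is connected if $e_W(A,A^c)\ne0$ for every measurable $A$ with $0<\mu_L(A)<1$ ($\mu_L$ Lebesgue measure). The Cheeger constant is $h_W=\inf_{A:\,0<\mu_L(A)<1}\frac{e_W(A,A^c)}{\min\{\mathrm{vol}_W(A),\mathrm{vol}_W(A^c)\}}$. *)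

(* Defs.v *)
From HB Require Import structures.
From mathcomp Require Import all_boot all_order all_algebra.
From mathcomp Require Import all_classical all_reals all_analysis.
Set Implicit Arguments. Unset Strict Implicit. Unset Printing Implicit Defensive.
Import Order.TTheory GRing.Theory Num.Theory.
Import numFieldNormedType.Exports.
Local Open Scope classical_set_scope.
Local Open Scope ring_scope.

Section GraphonDefs.
Variable R : realType.

Definition unit_itv : set R := `[0%R, 1%R].
Definition leb := (@lebesgue_measure R).
Definition leb2 := (leb \x leb)%E.

(* a graphon: measurable symmetric function [0,1]^2 -> [0,1]
   (represented as a function on R x R, only its values on [0,1]^2 matter) *)
Definition is_graphon (W : R -> R -> R) : Prop :=
  measurable_fun (unit_itv `*` unit_itv) (fun p : R * R => W p.1 p.2) /\
  (forall x y, x \in unit_itv -> y \in unit_itv -> W x y = W y x) /\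
  (forall x y, x \in unit_itv -> y \in unit_itv -> 0 <= W x y <= 1).

Definition edges (W : R -> R -> R) (A B : set R) : R :=
  Rintegral leb2 (A `*` B) (fun p : R * R => W p.1 p.2).

Definition vol (W : R -> R -> R) (A : set R) : R := edges W A unit_itv.

Definition compl01 (A : set R) : set R := unit_itv `\` A.

Definition admissible (A : set R) : Prop :=
  [/\ measurable A, A `<=` unit_itv, (0 < leb A)%E & (leb A < 1)%E].

Definition graphon_connected (W : R -> R -> R) : Prop :=
  forall A, admissible A -> edges W A (compl01 A) != 0.

Definition cheeger (W : R -> R -> R) : R :=
  inf [set edges W A (compl01 A) / Num.min (vol W A) (vol W (compl01 A))
      | A in admissible].

Definition Wn (n : nat) (x y : R) : R :=
  let a := 2^-1 - n%:R^-1 in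
  let b := 2^-1 + n%:R^-1 in
  let c := 2^-1 - expR (- n%:R) - n%:R^-1 in
  let d := 2^-1 + expR (- n%:R) + n%:R^-1 in
  if [|| (x <= a) && (b <= y), (b <= x) && (y <= a)
       | [&& c <= x, x <= d, c <= y & y <= d]] then 1 else 0.

Definition Wlim (x y : R) : R :=
  if (x \in `[0, 2^-1]) (+) (y \in `[0, 2^-1]) then 1 else 0.

End GraphonDefs.

(* Main.v *)
Require Import Defs.
From HB Require Import structures.
From mathcomp Require Import all_boot all_order all_algebra.
From mathcomp Require Import all_classical all_reals all_analysis.
From mathcomp Require Import ring lra.
Import measurable_realfun.
Import Order.TTheory GRing.Theory Num.Theory.
Import numFieldNormedType.Exports.
Local Open Scope classical_set_scope.
Local Open Scope ring_scope.
Set Implicit Arguments. Unset Strict Implicit. Unset Printing Implicit Defensive.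
Module Gen.
Section G.
Variable R : realType.
Local Notation mu := (@lebesgue_measure R).
Local Notation U := (@unit_itv R).

Lemma ind_ge0 (T : Type) (A : set T) x : (0:R) <= \1_A x.
Proof. by rewrite indicE ler0n. Qed.

Lemma ind_le1 (T : Type) (A : set T) x : (\1_A x : R) <= 1.
Proof. by rewrite indicE; case: (x \in A). Qed.

Lemma ind_sub (T : Type) (A B : set T) x : A `<=` B -> (\1_A x : R) <= \1_B x.
Proof.
move=> AB; rewrite !indicE; have [xA|xA] := boolP (x \in A).
  by rewrite (mem_set (AB _ (set_mem xA))).
by rewrite ler0n.
Qed.

Lemma ind_U3 (T : Type) (A B C : set T) x :
  (\1_(A `|` B `|` C) x : R) <= \1_A x + \1_B x + \1_C x.
Proof.
rewrite !indicE !in_setU; case: (x \in A); case: (x \in B); case: (x \in C) => //=;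
  rewrite ?addr0 ?add0r ?lerDl ?ler0n ?ler01 //.
by rewrite -addrA lerDl.
Qed.

Lemma ind_U2 (T : Type) (A B : set T) x : [disjoint A & B] ->
  (\1_(A `|` B) x : R) = \1_A x + \1_B x.
Abort.

Local Open Scope ereal_scope.

Lemma int_rectX (X Y P Q : set R) : measurable X -> measurable Y ->
  measurable P -> measurable Q ->
  \int[@leb2 R]_(p in X `*` Y) (\1_(P `*` Q) p : R)%:E = mu (X `&` P) * mu (Y `&` Q).
Proof.
move=> mX mY mP mQ.
rewrite integral_indic; last 2 first.
- exact: measurableX.
- exact: measurableX.
rewrite -setXI /leb2 /leb; etransitivity; first (apply: product_measure1E; exact: measurableI).
by rewrite setIC [Q `&` _]setIC.
Qed.

Lemma leb_U : mu U = 1.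
Proof. by rewrite /unit_itv lebesgue_measure_itv /= lte_fin ltr01 oppr0 adde0. Qed.

Lemma leb_unit_le1 (X : set R) : measurable X -> X `<=` U -> mu X <= 1.
Proof.
move=> mX XU; rewrite -leb_U; apply: le_measure => //; rewrite inE //.
exact: measurable_itv.
Qed.

Lemma leb_fin (X : set R) : measurable X -> X `<=` U -> mu X \is a fin_num.
Proof.
move=> mX XU; rewrite ge0_fin_numE ?measure_ge0//.
exact: (le_lt_trans (leb_unit_le1 mX XU) (ltry _)).
Qed.

Lemma mind_meas (P Q : set R) : measurable P -> measurable Q ->
  measurable_fun setT (\1_(P `*` Q) : R * R -> R).
Proof. by move=> mP mQ; apply: measurable_realfun.measurable_indic; exact: measurableX. Qed.

Lemma int_le (X Y : set R) (f g : R * R -> R) : measurable X -> measurable Y ->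
  measurable_fun setT f -> measurable_fun setT g -> (forall p, (0 <= f p)%R) ->
  (forall p, (X `*` Y) p -> f p <= g p)%R ->
  \int[@leb2 R]_(p in X `*` Y) (f p)%:E <= \int[@leb2 R]_(p in X `*` Y) (g p)%:E.
Proof.
move=> mX mY mf mg f0 fg; apply: ge0_le_integral.
- exact: measurableX.
- by move=> p _; rewrite lee_fin.
- by apply/measurable_realfun.measurable_EFinP; apply: measurable_funS mf.
- by apply/measurable_realfun.measurable_EFinP; apply: measurable_funS mg.
- by move=> p Hp; rewrite lee_fin fg.
Qed.

Lemma int_add (X Y : set R) (f g : R * R -> R) : measurable X -> measurable Y ->
  measurable_fun setT f -> measurable_fun setT g -> (forall p, (0 <= f p)%R) ->
  (forall p, (0 <= g p)%R) ->
  \int[@leb2 R]_(p in X `*` Y) (f p + g p)%:E =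
  \int[@leb2 R]_(p in X `*` Y) (f p)%:E + \int[@leb2 R]_(p in X `*` Y) (g p)%:E.
Proof.
move=> mX mY mf mg f0 g0.
under eq_integral do rewrite EFinD.
apply: ge0_integralD.
- exact: measurableX.
- by move=> p _; rewrite lee_fin.
- by apply/measurable_realfun.measurable_EFinP; apply: measurable_funS mf.
- by move=> p _; rewrite lee_fin.
- by apply/measurable_realfun.measurable_EFinP; apply: measurable_funS mg.
Qed.

End G.
Section G2.
Variable R : realType.
Local Notation mu := (@lebesgue_measure R).
Local Notation U := (@unit_itv R).

Definition good (f : R * R -> R) := measurable_fun setT f /\ forall p, 0 <= f p <= 1.
Definition mr (X : set R) : R := fine (mu X).

Lemma mU : measurable U.
Proof. exact: measurable_itv. Qed.

Lemma mr_ge0 X : 0 <= mr X.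
Proof. by apply: fine_ge0; exact: measure_ge0. Qed.

Lemma muE X : measurable X -> X `<=` U -> mu X = (mr X)%:E.
Proof. by move=> mX XU; rewrite /mr fineK // leb_fin. Qed.

Lemma mr_le1 X : measurable X -> X `<=` U -> mr X <= 1.
Proof. by move=> mX XU; rewrite -lee_fin -muE // leb_unit_le1. Qed.

Lemma mr_le X Y : measurable X -> measurable Y -> X `<=` Y -> Y `<=` U -> mr X <= mr Y.
Proof.
move=> mX mY XY YU; rewrite -lee_fin -!muE //; last exact: subset_trans YU.
by apply: le_measure => //; rewrite inE.
Qed.

Lemma mr_split (A I : set R) : measurable A -> measurable I -> A `<=` U ->
  mr (U `&` I) = mr (A `&` I) + mr ((U `\` A) `&` I).
Proof.
move=> mA mI AU.
have H : mu (U `&` I) = (mu ((U `&` I) `\` A) + mu (U `&` I `&` A))%E :=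
  measureDI mu (measurableI _ _ mU mI) mA.
have E1 : (U `&` I) `\` A = (U `\` A) `&` I by rewrite !setDE setIAC.
have E2 : U `&` I `&` A = A `&` I by rewrite setIAC (setIidr AU).
rewrite E1 E2 in H.
have hA : A `&` I `<=` U by move=> x [/AU].
have hB : (U `\` A) `&` I `<=` U by move=> x [[]].
have mB : measurable ((U `\` A) `&` I) by apply: measurableI => //; apply: measurableD => //; exact: mU.
rewrite (muE mB hB) (muE (measurableI _ _ mA mI) hA) in H.
rewrite {1}/mr H -EFinD /=; rewrite /mr; lra.
Qed.

Lemma mr_compl (A : set R) : measurable A -> A `<=` U ->
  mr (compl01 A) = 1 - mr A.
Proof.
move=> mA AU; have := mr_split mA measurableT AU.
rewrite !setIT /mr leb_U /= => ->; rewrite /compl01; lra.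
Qed.

Lemma mr_U2 A B : measurable A -> measurable B -> A `<=` U -> B `<=` U ->
  mr (A `|` B) <= mr A + mr B.
Proof.
move=> mA mB AU BU; have mAB : measurable (A `|` B) by exact: measurableU.
have ABU : A `|` B `<=` U by move=> x [/AU|/BU].
by rewrite -lee_fin EFinD -!muE //; exact: measureU2.
Qed.

Local Open Scope ereal_scope.

Lemma fine_geE (x : \bar R) (r : R) : x \is a fin_num -> r%:E <= x -> (r <= fine x)%R.
Proof. by move=> fx; rewrite -{1}(fineK fx) lee_fin. Qed.

Lemma fine_leE (x : \bar R) (r : R) : 0 <= x -> x <= r%:E -> (fine x <= r)%R.
Proof.
move=> x0 xr; have fx : x \is a fin_num.
  by rewrite ge0_fin_numE // (le_lt_trans xr) ?ltry.
by rewrite -lee_fin fineK.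
Qed.

Lemma int_ge0 (X Y : set R) f : (forall p, (0 <= f p)%R) ->
  0 <= \int[@leb2 R]_(p in X `*` Y) (f p)%:E.
Proof. by move=> f0; apply: integral_ge0 => p _; rewrite lee_fin. Qed.

Lemma int_fin (X Y : set R) f : good f -> measurable X -> measurable Y ->
  X `<=` U -> Y `<=` U -> \int[@leb2 R]_(p in X `*` Y) (f p)%:E \is a fin_num.
Proof.
move=> [mf f01] mX mY XU YU.
rewrite ge0_fin_numE; last by apply: int_ge0 => p; case/andP: (f01 p).
apply: (@le_lt_trans _ _ (\int[@leb2 R]_(p in X `*` Y) (\1_(setT `*` setT) p : R)%:E)).
  apply: int_le => //; first exact: mind_meas.
  - by move=> p; case/andP: (f01 p).
  - by move=> p _; rewrite indicE mem_set //; case/andP: (f01 p).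
rewrite int_rectX // !setIT (muE mX XU) (muE mY YU) -EFinM; exact: ltry.
Qed.

End G2.
Section G3.
Variable R : realType.
Local Notation mu := (@lebesgue_measure R).
Local Notation U := (@unit_itv R).

Lemma edge_lb (X Y P Q : set R) f : good f -> measurable X -> measurable Y ->
  X `<=` U -> Y `<=` U -> measurable P -> measurable Q ->
  (forall p, \1_(P `*` Q) p <= f p) ->
  mr (X `&` P) * mr (Y `&` Q) <= Rintegral (@leb2 R) (X `*` Y) f.
Proof.
move=> [mf f01] mX mY XU YU mP mQ H.
apply: fine_geE; first exact: int_fin.
have hXP : X `&` P `<=` U by move=> x [/XU].
have hYQ : Y `&` Q `<=` U by move=> x [/YU].
rewrite EFinM -(muE (measurableI _ _ mX mP) hXP) -(muE (measurableI _ _ mY mQ) hYQ).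
rewrite -int_rectX //; apply: int_le => //; exact: mind_meas.
Qed.

Lemma edge_ub (X Y P1 Q1 P2 Q2 P3 Q3 : set R) f : good f -> measurable X -> measurable Y ->
  X `<=` U -> Y `<=` U -> measurable P1 -> measurable Q1 ->
  measurable P2 -> measurable Q2 -> measurable P3 -> measurable Q3 ->
  (forall p, f p <= \1_(P1 `*` Q1) p + \1_(P2 `*` Q2) p + \1_(P3 `*` Q3) p) ->
  Rintegral (@leb2 R) (X `*` Y) f <=
  mr (X `&` P1) * mr (Y `&` Q1) + mr (X `&` P2) * mr (Y `&` Q2) + mr (X `&` P3) * mr (Y `&` Q3).
Proof.
move=> [mf f01] mX mY XU YU mP1 mQ1 mP2 mQ2 mP3 mQ3 H.
apply: fine_leE; first by apply: int_ge0 => p; case/andP: (f01 p).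
have sub (Z W : set R) : Z `<=` U -> Z `&` W `<=` U by move=> ZU x [/ZU].
have m1 := mind_meas mP1 mQ1; have m2 := mind_meas mP2 mQ2; have m3 := mind_meas mP3 mQ3.
have E : (\int[@leb2 R]_(p in X `*` Y) ((\1_(P1 `*` Q1) p + \1_(P2 `*` Q2) p + \1_(P3 `*` Q3) p)%R : R)%:E
   = mu (X `&` P1) * mu (Y `&` Q1) + mu (X `&` P2) * mu (Y `&` Q2) + mu (X `&` P3) * mu (Y `&` Q3))%E.
  have i0 (A : set (R * R)) p : (0 <= \1_A p :> R)%R by apply: ind_ge0.
  have m12 : measurable_fun setT (fun p => \1_(P1 `*` Q1) p + \1_(P2 `*` Q2) p : R)
    by exact: measurable_funD.
  rewrite (@int_add R X Y (fun p => \1_(P1 `*` Q1) p + \1_(P2 `*` Q2) p) (\1_(P3 `*` Q3)) mX mY m12 m3);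
    last 2 first.
  - by move=> p; rewrite addr_ge0.
  - by [].
  rewrite (@int_add R X Y (\1_(P1 `*` Q1)) (\1_(P2 `*` Q2)) mX mY m1 m2) //.
  by rewrite !int_rectX.
rewrite !EFinD !EFinM.
rewrite -!muE; try (apply: sub => //); try (apply: measurableI => //).
rewrite -E; apply: int_le => //.
- by apply: measurable_funD => //; apply: measurable_funD.
- by move=> p; case/andP: (f01 p).
Qed.

Lemma mr_itv (x y : R) : x <= y -> mr `[x, y] = y - x.
Proof.
move=> xy; rewrite /mr lebesgue_measure_itv /= lte_fin.
case: ltP => h /=; first by [].
have -> : x = y by apply/eqP; rewrite eq_le xy.
by rewrite subrr.
Qed.

End G3.
End Gen.
Import Gen.
Module WnLib.
Section WN.
Variable R : realType.
Local Notation mu := (@lebesgue_measure R).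
Local Notation U := (@unit_itv R).
Variable n : nat.

Definition ni : R := n%:R^-1.
Definition pe : R := expR (- n%:R).
Definition pa : R := 2^-1 - ni.
Definition pb : R := 2^-1 + ni.
Definition pc : R := 2^-1 - pe - ni.
Definition pd : R := 2^-1 + pe + ni.
Definition I1 : set R := `]-oo, pa].
Definition I2 : set R := `[pb, +oo[.
Definition I3 : set R := `[pc, pd].
Definition S1 := I1 `*` I2.
Definition S2 := I2 `*` I1.
Definition S3 := I3 `*` I3.

Lemma Wn_def (x y : R) : Wn n x y = if [|| (x <= pa) && (pb <= y), (pb <= x) && (y <= pa)
       | [&& pc <= x, x <= pd, pc <= y & y <= pd]] then 1 else 0.
Proof. by []. Qed.

Lemma Wn_ind p : Wn n p.1 p.2 = \1_(S1 `|` S2 `|` S3) p.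
Proof.
case: p => x y; rewrite Wn_def indicE !in_setU !in_setX /= !mem_setE !in_itv /= !andbT.
by rewrite -!andbA orbA; case: ifP.
Qed.

Lemma mI1 : measurable I1. Proof. exact: measurable_itv. Qed.
Lemma mI2 : measurable I2. Proof. exact: measurable_itv. Qed.
Lemma mI3 : measurable I3. Proof. exact: measurable_itv. Qed.

Lemma Wn_meas : measurable_fun setT (fun p : R * R => Wn n p.1 p.2).
Proof.
rewrite (_ : (fun p : R * R => Wn n p.1 p.2) = \1_(S1 `|` S2 `|` S3)).
  apply: measurable_realfun.measurable_indic.
  apply: measurableU; [apply: measurableU|]; apply: measurableX;
    (exact: mI1 || exact: mI2 || exact: mI3).
by apply/funext => p; rewrite Wn_ind.
Qed.

Lemma Wn_good : good (fun p : R * R => Wn n p.1 p.2).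
Proof.
split; first exact: Wn_meas.
by move=> p; rewrite Wn_ind ind_ge0 ind_le1.
Qed.

Lemma Wn_sym (x y : R) : Wn n x y = Wn n y x.
Proof.
rewrite !Wn_def; congr (if _ then _ else _).
by case: (x <= pa); case: (pb <= y); case: (pb <= x); case: (y <= pa);
   case: (pc <= x); case: (x <= pd); case: (pc <= y); case: (y <= pd).
Qed.

Lemma Wn_lb1 p : \1_S1 p <= Wn n p.1 p.2.
Proof. by rewrite Wn_ind; apply: ind_sub => q Hq; left; left. Qed.
Lemma Wn_lb2 p : \1_S2 p <= Wn n p.1 p.2.
Proof. by rewrite Wn_ind; apply: ind_sub => q Hq; left; right. Qed.
Lemma Wn_lb3 p : \1_S3 p <= Wn n p.1 p.2.
Proof. by rewrite Wn_ind; apply: ind_sub => q Hq; right. Qed.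
Lemma Wn_ub p : Wn n p.1 p.2 <= \1_S1 p + \1_S2 p + \1_S3 p.
Proof. by rewrite Wn_ind; apply: ind_U3. Qed.

Lemma ni_facts : (3 <= n)%N -> 0 < ni /\ ni * n%:R = 1 /\ 3 <= (n%:R : R).
Proof.
move=> hn; have n3 : (3 : R) <= n%:R by rewrite (ler_nat R 3 n).
have n0 : (n%:R : R) != 0 by apply/eqP => h; rewrite h in n3; lra.
split; first by rewrite /ni invr_gt0; lra.
by split => //; rewrite /ni mulVf.
Qed.

Lemma pe_facts : (3 <= n)%N -> 0 < pe /\ pe * n%:R <= 1.
Proof.
move=> hn; have [_ [_ n3]] := ni_facts hn.
split; first exact: expR_gt0.
have h := expR_ge1Dx (n%:R : R).
have e0 := expR_gt0 (n%:R : R).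
rewrite /pe expRN.
rewrite mulrC ler_pdivrMr //; lra.
Qed.

Lemma pe_le_ni : (3 <= n)%N -> pe <= ni.
Proof.
move=> hn; have [h1 [h2 h3]] := ni_facts hn; have [h4 h5] := pe_facts hn.
nra.
Qed.


Definition K1 : set R := `[pa - pe / 2, pa].
Definition K2 : set R := `[pb, pb + pe / 2].

Lemma basic_facts : (3 <= n)%N ->
  [/\ 0 < ni, ni <= 3^-1, 0 < pe & pe <= ni].
Proof.
move=> hn; have [h1 [h2 h3]] := ni_facts hn; have [h4 h5] := pe_facts hn.
split => //; last exact: pe_le_ni.
have -> : (3^-1 : R) = 3^-1 * 1 by rewrite mulr1.
rewrite -h2 ler_pdivlMl; nra.
Qed.

Lemma U_cover : (3 <= n)%N -> U `<=` I1 `|` I2 `|` I3.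
Proof.
move=> hn x _; have [h1 h2 h3 h4] := basic_facts hn.
rewrite /I1 /I2 /I3 /=.
case: (leP x pa) => ha; first by left; left; rewrite /= in_itv /= ha.
case: (leP pb x) => hb; first by left; right; rewrite /= in_itv /= hb.
right; rewrite /= in_itv /=; apply/andP; rewrite /pc /pd; split; rewrite /pa /pb in ha hb; lra.
Qed.

Lemma K_facts : (3 <= n)%N ->
  (K1 `<=` U /\ K1 `<=` I1 /\ K1 `<=` I3) /\ (K2 `<=` U /\ K2 `<=` I2 /\ K2 `<=` I3).
Proof.
move=> hn; have [h1 h2 h3 h4] := basic_facts hn.
rewrite /K1 /K2 /I1 /I2 /I3 /unit_itv /pa /pb /pc /pd.
(split; [split; [|split]|split; [|split]]) => x /=; rewrite !in_itv /= => /andP[hx1 hx2]; rewrite ?andbT; try apply/andP; try split; lra.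
Qed.

Lemma mK1 : measurable K1. Proof. exact: measurable_itv. Qed.
Lemma mK2 : measurable K2. Proof. exact: measurable_itv. Qed.

Lemma mrK : (3 <= n)%N -> mr K1 = pe / 2 /\ mr K2 = pe / 2.
Proof.
move=> hn; have [h1 h2 h3 h4] := basic_facts hn.
rewrite /K1 /K2 !mr_itv; lra.
Qed.


Lemma subI_U (X Y : set R) : X `<=` U -> X `&` Y `<=` U.
Proof. by move=> XU x [/XU]. Qed.

Lemma Wn_connected : (3 <= n)%N -> graphon_connected (@Wn R n).
Proof.
move=> hn A [mA AU A0 A1].
have mB : measurable (compl01 A) by apply: measurableD => //; exact: mU.
have BU : compl01 A `<=` U by move=> x [].
set B := compl01 A in mB BU *.
have [h1 h2 h3 h4] := basic_facts hn.
have [[K1U [K1I1 K1I3]] [K2U [K2I2 K2I3]]] := K_facts hn.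
have [mK1v mK2v] := mrK hn.
have gW := Wn_good.
have L1 := edge_lb gW mA mB AU BU mI1 mI2 Wn_lb1.
have L2 := edge_lb gW mA mB AU BU mI2 mI1 Wn_lb2.
have L3 := edge_lb gW mA mB AU BU mI3 mI3 Wn_lb3.
rewrite /edges; set E := Rintegral _ _ _ in L1 L2 L3 *.
have mAI (I : set R) : measurable I -> measurable (A `&` I) by move=> mI; exact: measurableI.
have mBI (I : set R) : measurable I -> measurable (B `&` I) by move=> mI; exact: measurableI.
have S1 := mr_split mA mK1 AU; rewrite (setIidr K1U) mK1v -/(compl01 A) -/B in S1.
have S2 := mr_split mA mK2 AU; rewrite (setIidr K2U) mK2v -/(compl01 A) -/B in S2.
have le1 (X I J : set R) : measurable X -> X `<=` U -> measurable I -> measurable J ->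
    I `<=` J -> mr (X `&` I) <= mr (X `&` J).
  move=> mX XU mI mJ IJ; apply: mr_le; try exact: measurableI.
  - by move=> x [Xx Ix]; split => //; exact: IJ.
  - exact: subI_U.
have a11 := le1 _ _ _ mA AU mK1 mI1 K1I1.
have a13 := le1 _ _ _ mA AU mK1 mI3 K1I3.
have b11 := le1 _ _ _ mB BU mK1 mI1 K1I1.
have b13 := le1 _ _ _ mB BU mK1 mI3 K1I3.
have a22 := le1 _ _ _ mA AU mK2 mI2 K2I2.
have a23 := le1 _ _ _ mA AU mK2 mI3 K2I3.
have b22 := le1 _ _ _ mB BU mK2 mI2 K2I2.
have b23 := le1 _ _ _ mB BU mK2 mI3 K2I3.
have cov (X : set R) : measurable X -> X `<=` U ->
    mr X <= mr (X `&` I1) + mr (X `&` I2) + mr (X `&` I3).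
  move=> mX XU.
  apply: (@le_trans _ _ (mr ((X `&` I1 `|` X `&` I2) `|` X `&` I3))).
    apply: mr_le => //.
    - by apply: measurableU; [apply: measurableU|]; apply: measurableI => //;
        (exact: mI1 || exact: mI2 || exact: mI3).
    - move=> x Xx; have := U_cover hn (XU x Xx) => -[[?|?]|?];
        [left; left | left; right | right]; by split.
    - move=> x [[[/XU]|[/XU]]|[/XU]] //.
  apply: (le_trans (mr_U2 _ _ _ _)).
  - by apply: measurableU; apply: measurableI => //; (exact: mI1 || exact: mI2).
  - by apply: measurableI => //; exact: mI3.
  - by move=> x [[/XU]|[/XU]].
  - exact: subI_U.
  rewrite lerD2r; apply: mr_U2; try (apply: measurableI => //; (exact: mI1 || exact: mI2));
    exact: subI_U.
have cA := cov _ mA AU; have cB := cov _ mB BU.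
have mrA0 : 0 < mr A by rewrite -lte_fin -muE.
have mrA1 : mr A < 1 by rewrite -lte_fin -muE.
have mrB : mr B = 1 - mr A by rewrite /B mr_compl.
have g0 (X : set R) : 0 <= mr X by exact: mr_ge0.
apply/eqP => E0; rewrite E0 in L1 L2 L3.
have z (u v : R) : 0 <= u -> 0 <= v -> u * v <= 0 -> u = 0 \/ v = 0.
  move=> u0 v0 uv; have : u * v = 0 by apply/eqP; rewrite eq_le uv mulr_ge0.
  by move/eqP; rewrite mulf_eq0 => /orP[/eqP|/eqP]; [left|right].
have := z _ _ (g0 _) (g0 _) L1; have := z _ _ (g0 _) (g0 _) L2;
have := z _ _ (g0 _) (g0 _) L3.
have := g0 (A `&` K1); have := g0 (B `&` K1); have := g0 (A `&` K2); have := g0 (B `&` K2).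
have := g0 (A `&` I1); have := g0 (B `&` I1); have := g0 (A `&` I2); have := g0 (B `&` I2).
move=> ? ? ? ? ? ? ? ? [?|?] [?|?] [?|?]; clear A0 A1; lra.
Qed.
End WN.
End WnLib.
Import WnLib.
Module ChLib.
Section CH.
Variable R : realType.
Local Notation mu := (@lebesgue_measure R).
Local Notation U := (@unit_itv R).

Definition chratio (W : R -> R -> R) (A : set R) : R :=
  edges W A (compl01 A) / Num.min (vol W A) (vol W (compl01 A)).

Lemma edges_ge0 (W : R -> R -> R) A B : (forall x y, 0 <= W x y) -> 0 <= edges W A B.
Proof.
move=> W0; rewrite /edges /Rintegral; apply: fine_ge0.
by apply: int_ge0 => p; exact: W0.
Qed.

Lemma ratio_ge0 (W : R -> R -> R) (A : set R) : (forall x y, 0 <= W x y) -> 0 <= chratio W A.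
Proof.
move=> W0; rewrite /chratio divr_ge0 ?edges_ge0 //.
by rewrite le_min /vol !edges_ge0.
Qed.

Lemma cheeger_ge0 (W : R -> R -> R) : (forall x y, 0 <= W x y) -> (exists A : set R, @admissible R A) -> 0 <= cheeger W.
Proof.
move=> W0 [A hA]; apply: lb_le_inf; first by exists (chratio W A), A.
by move=> r [B hB <-]; exact: ratio_ge0.
Qed.

Lemma cheeger_le (W : R -> R -> R) (A : set R) : (forall x y, 0 <= W x y) -> @admissible R A -> cheeger W <= chratio W A.
Proof.
move=> W0 hA; apply: ge_inf; last by exists A.
by exists 0 => r [B hB <-]; exact: ratio_ge0.
Qed.

Lemma cheeger_lb (W : R -> R -> R) (r : R) : (exists A : set R, @admissible R A) ->
  (forall A : set R, @admissible R A -> r <= chratio W A) -> r <= cheeger W.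
Proof.
move=> [A hA] H; apply: lb_le_inf; first by exists (chratio W A), A.
by move=> s [B hB <-]; exact: H.
Qed.

End CH.
End ChLib.
Import ChLib.
Module Wn2Lib.
Section WN2.
Variable R : realType.
Local Notation mu := (@lebesgue_measure R).
Local Notation U := (@unit_itv R).
Variable n : nat.
Local Notation ni := (@ni R n).
Local Notation pe := (@pe R n).
Local Notation pa := (@pa R n).
Local Notation pb := (@pb R n).
Local Notation pc := (@pc R n).
Local Notation pd := (@pd R n).
Local Notation I1 := (@I1 R n).
Local Notation I2 := (@I2 R n).
Local Notation I3 := (@I3 R n).

Lemma pe_cubic : (3 <= n)%N -> pe <= 6 * ni ^+ 3.
Proof.
move=> hn; have [h1 [h2 h3]] := ni_facts R hn.
have e := @expR_ge1Dxn R (n%:R) 2 (ler0n _ _).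
have E6 : (2.+1)`!%:R = 6 :> R by [].
rewrite E6 in e.
have t0 : (0 : R) < n%:R ^+ 3 / 6 by apply: divr_gt0 => //; apply: exprn_gt0; lra.
rewrite /WnLib.pe expRN.
apply: (@le_trans _ _ ((n%:R ^+ 3 / 6)^-1)).
  rewrite lef_pV2 ?posrE ?expR_gt0 //.
  move: e; rewrite /= => e; lra.
by rewrite invfM invrK /WnLib.ni exprVn mulrC.
Qed.

Lemma Wn_ge0 (x y : R) : 0 <= Wn n x y.
Proof. by have [_ /(_ (x, y)) /andP[]] := Wn_good R n. Qed.

Lemma cheeger_Wn_ub : (12 <= n)%N -> cheeger (@Wn R n) <= 3 * ni.
Proof.
move=> hn12; have hn : (3 <= n)%N by apply: leq_trans hn12.
have [h1 h2 h3 h4] := basic_facts R hn; have [_ [h5 h6]] := ni_facts R hn.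
have n12 : (12:R) <= n%:R by rewrite (ler_nat R 12 n).
have ni12 : ni <= 12^-1.
  have -> : (12^-1 : R) = 12^-1 * 1 by rewrite mulr1.
  rewrite -h5 ler_pdivlMl; nra.
have pe3 := pe_cubic hn.
have I3U : I3 `<=` U.
  move=> x; rewrite /WnLib.I3 /unit_itv /= !in_itv /= /WnLib.pc /WnLib.pd => /andP[? ?].
  apply/andP; split; lra.
have mB0 : measurable (compl01 I3) by apply: measurableD; [exact: mU|exact: mI3].
have B0U : compl01 I3 `<=` U by move=> x [].
have mrI3 : mr I3 = pd - pc by rewrite /WnLib.I3 mr_itv // /WnLib.pc /WnLib.pd; lra.
have hadm : @admissible R I3.
  split; [exact: mI3 | exact: I3U | |]; rewrite /leb (muE (@mI3 R n) I3U) lte_fin mrI3 /WnLib.pc /WnLib.pd; lra.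
apply: le_trans (cheeger_le Wn_ge0 hadm) _.
rewrite /chratio.
set B0 := compl01 I3 in mB0 B0U *.
have sub (X Y : set R) : X `<=` U -> X `&` Y `<=` U by move=> XU x [/XU].
have mI (X Y : set R) : measurable X -> measurable Y -> measurable (X `&` Y) by move=> ? ?; exact: measurableI.
have Eub : edges (@Wn R n) I3 B0 <= 2 * pe.
  apply: le_trans (edge_ub (Wn_good R n) (@mI3 R n) mB0 I3U B0U (@mI1 R n) (@mI2 R n) (@mI2 R n) (@mI1 R n) (@mI3 R n) (@mI3 R n) (@Wn_ub R n)) _.
  have m1 : mr (I3 `&` I1) <= pe.
    have -> : pe = pa - pc by rewrite /WnLib.pa /WnLib.pc; lra.
    rewrite -mr_itv; last by rewrite /WnLib.pa /WnLib.pc; lra.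
    apply: mr_le; [exact: (mI _ _ (@mI3 R n) (@mI1 R n)) | exact: measurable_itv | |].
    - move=> x [] ; rewrite /WnLib.I3 /WnLib.I1 /= !in_itv /= => /andP[? ?] ?.
      by apply/andP; split.
    - move=> x; rewrite /= in_itv /= => /andP[x1 x2]; apply: I3U.
      rewrite /WnLib.I3 /= in_itv /=; apply/andP; split => //; rewrite /WnLib.pa /WnLib.pd in x2 *; lra.
  have m3 : mr (I3 `&` I2) <= pe.
    have -> : pe = pd - pb by rewrite /WnLib.pd /WnLib.pb; lra.
    rewrite -mr_itv; last by rewrite /WnLib.pd /WnLib.pb; lra.
    apply: mr_le; [exact: (mI _ _ (@mI3 R n) (@mI2 R n)) | exact: measurable_itv | |].
    - move=> x [] ; rewrite /WnLib.I3 /WnLib.I2 /= !in_itv /= ?andbT => /andP[? ?] ?.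
      by apply/andP; split.
    - move=> x; rewrite /= in_itv /= => /andP[x1 x2]; apply: I3U.
      rewrite /WnLib.I3 /= in_itv /=; apply/andP; split => //; rewrite /WnLib.pb /WnLib.pc in x1 *; lra.
  have m2 : mr (B0 `&` I2) <= 1 by apply: mr_le1; [exact: (mI _ _ mB0 (@mI2 R n))|exact: sub].
  have m4 : mr (B0 `&` I1) <= 1 by apply: mr_le1; [exact: (mI _ _ mB0 (@mI1 R n))|exact: sub].
  have m5 : mr (B0 `&` I3) = 0.
    have -> : B0 `&` I3 = set0 by apply/seteqP; split => x // [[_ nI] I]; exact: nI I.
    by rewrite /mr measure0.
  rewrite m5 mulr0 addr0.
  have := mr_ge0 (I3 `&` I1); have := mr_ge0 (I3 `&` I2);
  have := mr_ge0 (B0 `&` I1); have := mr_ge0 (B0 `&` I2).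
  nra.
have V1 : (pd - pc) ^+ 2 <= vol (@Wn R n) I3.
  have := edge_lb (Wn_good R n) (@mI3 R n) (@mU R) I3U (@subset_refl _ _) (@mI3 R n) (@mI3 R n) (@Wn_lb3 R n).
  by rewrite setIid (setIidr I3U) mrI3 expr2.
have V2 : mr (B0 `&` I1) * mr (U `&` I2) <= vol (@Wn R n) B0.
  exact: (edge_lb (Wn_good R n) mB0 (@mU R) B0U (@subset_refl _ _) (@mI1 R n) (@mI2 R n) (@Wn_lb1 R n)).
have W1 : pc / 2 <= mr (B0 `&` I1).
  have -> : pc / 2 = pc / 2 - 0 by rewrite subr0.
  rewrite -mr_itv; last by rewrite /WnLib.pc; lra.
  apply: mr_le; [exact: measurable_itv | exact: (mI _ _ mB0 (@mI1 R n)) | |].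
  - move=> x; rewrite /= in_itv /= => /andP[x1 x2]; split; [split|].
    + rewrite /unit_itv /= in_itv /=; apply/andP; split => //; rewrite /WnLib.pc in x2; lra.
    + rewrite /WnLib.I3 /= in_itv /= => /andP[y1 y2]; rewrite /WnLib.pc in x2 y1; lra.
    + rewrite /WnLib.I1 /= in_itv /=; rewrite /WnLib.pc /WnLib.pa in x2 *; lra.
  - exact: sub.
have W2 : 1 - pb <= mr (U `&` I2).
  rewrite -mr_itv; last by rewrite /WnLib.pb; lra.
  apply: mr_le; [exact: measurable_itv | exact: (mI _ _ (@mU R) (@mI2 R n)) | |].
  - move=> x; rewrite /= in_itv /= => /andP[x1 x2]; split.
    + rewrite /unit_itv /= in_itv /=; apply/andP; split => //; rewrite /WnLib.pb in x1; lra.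
    + by rewrite /WnLib.I2 /= in_itv /= x1.
  - exact: sub.
have g1 := mr_ge0 (B0 `&` I1); have g2 := mr_ge0 (U `&` I2).
have mn : 4 * ni ^+ 2 <= Num.min (vol (@Wn R n) I3) (vol (@Wn R n) B0).
  rewrite le_min; apply/andP; split.
    apply: le_trans V1; rewrite /WnLib.pd /WnLib.pc; nra.
  apply: le_trans V2; rewrite /WnLib.pc /WnLib.pb in W1 W2; nra.
have ni2 : 0 < 4 * ni ^+ 2 by rewrite mulr_gt0 // exprn_gt0.
rewrite ler_pdivrMr; last exact: lt_le_trans mn.
apply: le_trans Eub _.
apply: (@le_trans _ _ (3 * ni * (4 * ni ^+ 2))); last by rewrite ler_pM2l // mulr_gt0.
rewrite (_ : 3 * ni * (4 * ni ^+ 2) = 2 * (6 * ni ^+ 3)); last by rewrite !exprS expr0; ring.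
lra.
Qed.

End WN2.
End Wn2Lib.
Import Wn2Lib.
Module WlLib.
Section WL.
Variable R : realType.
Local Notation mu := (@lebesgue_measure R).
Local Notation U := (@unit_itv R).

Definition L : set R := `[0, 2^-1].
Definition Lc : set R := ~` L.

Lemma mL : measurable L. Proof. exact: measurable_itv. Qed.
Lemma mLc : measurable Lc. Proof. exact: measurableC mL. Qed.

Lemma Wlim_ind (p : R * R) : Wlim p.1 p.2 = \1_(L `*` Lc) p + \1_(Lc `*` L) p.
Proof.
case: p => x y; rewrite /Wlim !indicE !in_setX /= /Lc !in_setC /L !mem_setE /=.
by case: (x \in _); case: (y \in _); rewrite /= ?addr0 ?add0r.
Qed.

Lemma Wlim_meas : measurable_fun setT (fun p : R * R => Wlim p.1 p.2).
Proof.
rewrite (_ : (fun p : R * R => Wlim p.1 p.2) = (\1_(L `*` Lc) \+ \1_(Lc `*` L))).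
  by apply: measurable_funD; apply: mind_meas; (exact: mL || exact: mLc).
by apply/funext => p; rewrite Wlim_ind.
Qed.

Lemma Wlim_good : good (fun p : R * R => Wlim p.1 p.2).
Proof.
split; first exact: Wlim_meas.
move=> p; rewrite /Wlim; case: ifP => _; rewrite ?lexx ?ler01 //.
Qed.

Lemma Wlim_ge0 (x y : R) : 0 <= Wlim x y.
Proof. by rewrite /Wlim; case: ifP. Qed.

Lemma Wlim_sym (x y : R) : Wlim x y = Wlim y x.
Proof. by rewrite /Wlim addbC. Qed.

Lemma edges_Wlim (X Y : set R) : measurable X -> measurable Y -> X `<=` U -> Y `<=` U ->
  edges (@Wlim R) X Y = mr (X `&` L) * mr (Y `&` Lc) + mr (X `&` Lc) * mr (Y `&` L).
Proof.
move=> mX mY XU YU; rewrite /edges /Rintegral.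
under eq_integral do rewrite Wlim_ind.
have sub (Z W : set R) : Z `<=` U -> Z `&` W `<=` U by move=> ZU x [/ZU].
rewrite int_add //; try (apply: mind_meas; (exact: mL || exact: mLc)); try (move=> p; exact: ind_ge0).
rewrite !int_rectX //; try (exact: mL || exact: mLc).
rewrite !muE //; try (apply: sub => //); try (apply: measurableI => //; (exact: mL || exact: mLc)).
all: try by rewrite -!EFinM -EFinD.
Qed.

Lemma mr_splitI (A I : set R) : measurable A -> measurable I -> A `<=` U ->
  mr A = mr (A `&` I) + mr (A `&` ~` I).
Proof.
move=> mA mI AU.
have H : mu A = (mu (A `\` I) + mu (A `&` I))%E := measureDI mu mA mI.
have hA : A `&` I `<=` U by move=> x [/AU].
have hB : A `&` ~` I `<=` U by move=> x [/AU].
have mB : measurable (A `&` ~` I) by apply: measurableI => //; exact: measurableC.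
rewrite setDE (muE mB hB) (muE (measurableI _ _ mA mI) hA) in H.
rewrite {1}/mr H -EFinD /=; lra.
Qed.

Lemma mrL : mr L = 2^-1.
Proof. by rewrite /L mr_itv ?subr0 //; lra. Qed.

Lemma LU : L `<=` U.
Proof. move=> x; rewrite /L /unit_itv /= !in_itv /= => /andP[? ?]; apply/andP; split; lra. Qed.

Lemma mrUL : mr (U `&` L) = 2^-1.
Proof. by rewrite (setIidr LU) mrL. Qed.

Lemma mrULc : mr (U `&` Lc) = 2^-1.
Proof.
have := mr_splitI (@mU R) mL (@subset_refl _ U).
rewrite /mr leb_U /= -/(mr _) (setIidr LU) mrL -/Lc => h.
rewrite /mr; lra.
Qed.


Lemma ratio_Wlim_ge (A : set R) : admissible A -> 2^-1 <= chratio (@Wlim R) A.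
Proof.
move=> [mA AU A0 A1].
have mB : measurable (compl01 A) by apply: measurableD => //; exact: mU.
have BU : compl01 A `<=` U by move=> x [].
rewrite /chratio /vol !edges_Wlim //; try exact: mU.
set B := compl01 A in mB BU *.
rewrite mrUL mrULc.
have sa := mr_split mA mL AU; rewrite mrUL -/(compl01 A) -/B in sa.
have sb := mr_split mA mLc AU; rewrite mrULc -/(compl01 A) -/B in sb.
have sA := mr_splitI mA mL AU; rewrite -/Lc in sA.
have mrA0 : 0 < mr A by rewrite -lte_fin -muE.
have mrA1 : mr A < 1 by rewrite -lte_fin -muE.
have := mr_ge0 (A `&` L); have := mr_ge0 (A `&` Lc); have := mr_ge0 (B `&` L); have := mr_ge0 (B `&` Lc).
move: sa sb sA mrA0 mrA1.
set a := mr (A `&` L); set b := mr (A `&` Lc); set a' := mr (B `&` L); set b' := mr (B `&` Lc).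
move=> sa sb sA mrA0 mrA1 g1 g2 g3 g4.
clear A0 A1.
have mpos : 0 < Num.min (a * 2^-1 + b * 2^-1) (a' * 2^-1 + b' * 2^-1).
  rewrite lt_min; apply/andP; split; lra.
rewrite ler_pdivlMr //.
have [hs|hs] := leP (a + b) (2^-1).
  have hm : Num.min (a * 2^-1 + b * 2^-1) (a' * 2^-1 + b' * 2^-1) <= a * 2^-1 + b * 2^-1.
    by rewrite ge_min lexx.
  apply: (@le_trans _ _ (2^-1 * (a * 2^-1 + b * 2^-1))); first by rewrite ler_pM2l //; lra.
  have q1 : 0 <= (a + b) * (2^-1 - (a + b)) by apply: mulr_ge0; lra.
  have q2 : 0 <= (a - b) ^+ 2 by exact: sqr_ge0.
  have ea' : a' = 2^-1 - a by lra.
  have eb' : b' = 2^-1 - b by lra.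
  rewrite ea' eb'; rewrite expr2 in q2; nra.
have hm : Num.min (a * 2^-1 + b * 2^-1) (a' * 2^-1 + b' * 2^-1) <= a' * 2^-1 + b' * 2^-1.
  by rewrite ge_min lexx orbT.
apply: (@le_trans _ _ (2^-1 * (a' * 2^-1 + b' * 2^-1))); first by rewrite ler_pM2l //; lra.
have q1 : 0 <= (a' + b') * (2^-1 - (a' + b')) by apply: mulr_ge0; lra.
have q2 : 0 <= (a' - b') ^+ 2 by exact: sqr_ge0.
have ea : a = 2^-1 - a' by lra.
have eb : b = 2^-1 - b' by lra.
rewrite ea eb; rewrite expr2 in q2; nra.
Qed.

Definition Ast : set R := `[4^-1, 4^-1 + 2^-1].

Lemma Ast_adm : admissible Ast.
Proof.
have AU : Ast `<=` U.
  move=> x; rewrite /Ast /unit_itv /= !in_itv /= => /andP[? ?]; apply/andP; split; lra.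
have mA : measurable Ast by exact: measurable_itv.
have h : mr Ast = 2^-1 by rewrite /Ast mr_itv; lra.
split => //; rewrite /leb (muE mA AU) h lte_fin; lra.
Qed.

Lemma ratio_Ast : chratio (@Wlim R) Ast <= 2^-1.
Proof.
have [mA AU _ _] := Ast_adm.
have mB : measurable (compl01 Ast) by apply: measurableD => //; exact: mU.
have BU : compl01 Ast `<=` U by move=> x [].
rewrite /chratio /vol !edges_Wlim //; try exact: mU.
set B := compl01 Ast in mB BU *.
rewrite mrUL mrULc.
have sa := mr_split mA mL AU; rewrite mrUL -/(compl01 Ast) -/B in sa.
have sb := mr_split mA mLc AU; rewrite mrULc -/(compl01 Ast) -/B in sb.
have sA := mr_splitI mA mL AU; rewrite -/Lc in sA.
have h : mr Ast = 2^-1 by rewrite /Ast mr_itv; lra.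
have hL : mr (Ast `&` L) = 4^-1.
  have mAL : measurable (Ast `&` L) by apply: measurableI => //; exact: mL.
  have sub1 : Ast `&` L `<=` `[4^-1, 2^-1].
    move=> x []; rewrite /Ast /L /= !in_itv /= => /andP[? ?] /andP[? ?].
    by apply/andP; split.
  have sub2 : `[4^-1, 2^-1] `<=` Ast `&` L.
    move=> x; rewrite /Ast /L /= !in_itv /= => /andP[? ?].
    split; apply/andP; split => //; lra.
  have U1 : `[4^-1, 2^-1] `<=` U by move=> x /sub2 [/AU].
  have U2 : Ast `&` L `<=` U by move=> x [/AU].
  have := mr_le mAL (measurable_itv _) sub1 U1.
  have := mr_le (measurable_itv _) mAL sub2 U2.
  rewrite mr_itv; last lra.
  move=> ? ?; lra.
rewrite hL in sa sA *; rewrite h in sA.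
have -> : mr (Ast `&` Lc) = 4^-1 by lra.
have -> : mr (B `&` L) = 4^-1 by lra.
have -> : mr (B `&` Lc) = 4^-1 by lra.
rewrite minxx ler_pdivrMr; lra.
Qed.

Lemma cheeger_Wlim : cheeger (@Wlim R) = 2^-1.
Proof.
apply/eqP; rewrite eq_le; apply/andP; split.
  exact: le_trans (cheeger_le (@Wlim_ge0) Ast_adm) ratio_Ast.
apply: cheeger_lb; first by exists Ast; exact: Ast_adm.
exact: ratio_Wlim_ge.
Qed.

End WL.
End WlLib.
Import WlLib.
Module L1Lib.
Section L1.
Variable R : realType.
Local Notation mu := (@lebesgue_measure R).
Local Notation U := (@unit_itv R).
Variable n : nat.
Local Notation ni := (@ni R n).
Local Notation pe := (@pe R n).
Local Notation pa := (@pa R n).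
Local Notation pb := (@pb R n).
Local Notation pc := (@pc R n).
Local Notation pd := (@pd R n).
Local Notation I1 := (@I1 R n).
Local Notation I2 := (@I2 R n).
Local Notation I3 := (@I3 R n).

Lemma side (x : R) : (3 <= n)%N -> 0 <= x -> ~ (pc <= x <= pd) ->
  [/\ (x <= pa) = (x <= 2^-1), (pb <= x) = ~~ (x <= 2^-1) & (pc <= x) && (x <= pd) = false].
Proof.
move=> hn x0 nx; have [h1 h2 h3 h4] := basic_facts R hn.
rewrite /WnLib.pa /WnLib.pb /WnLib.pc /WnLib.pd in nx *.
have [xc|xc] := ltP x (2^-1 - pe - ni).
  split.
  - by apply/idP/idP => _; lra.
  - apply/idP/idP => H; [rewrite -ltNge; lra | move: H; rewrite -ltNge => H; lra].
  - by apply/negbTE/andP => -[? ?]; lra.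
have [xd|xd] := leP x (2^-1 + pe + ni); first by exfalso; apply: nx; rewrite xc xd.
split.
- by apply/idP/idP => H; [lra | move: H; lra].
- apply/idP/idP => H; [rewrite -ltNge; lra | lra].
- by apply/negbTE/andP => -[? ?]; lra.
Qed.

Lemma diff_pt (p : R * R) : (3 <= n)%N -> (U `*` U) p ->
  `|Wn n p.1 p.2 - Wlim p.1 p.2| <= \1_(I3 `*` setT) p + \1_(setT `*` I3) p.
Proof.
case: p => x y hn [/= Ux Uy].
have b01 (t : R) : (t = 0 \/ t = 1) -> 0 <= t <= 1 by case=> ->; rewrite ?lexx ?ler01.
have hW : 0 <= Wn n x y <= 1 by apply: b01; rewrite Wn_def; case: ifP => _; auto.
have hL : 0 <= Wlim x y <= 1 by apply: b01; rewrite /Wlim; case: ifP => _; auto.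
have i1 : 0 <= \1_(I3 `*` setT) (x, y) :> R by exact: ind_ge0.
have i2 : 0 <= \1_(setT `*` I3) (x, y) :> R by exact: ind_ge0.
have d1 : `|Wn n x y - Wlim x y| <= 1.
  rewrite ler_norml; apply/andP; split; move: hW hL => /andP[? ?] /andP[? ?]; lra.
have [x3|x3] := boolP (pc <= x <= pd).
  have -> : \1_(I3 `*` setT) (x, y) = 1 :> R.
    by rewrite indicE mem_set //; split => //=; rewrite /WnLib.I3 /= in_itv.
  lra.
have [y3|y3] := boolP (pc <= y <= pd).
  have -> : \1_(setT `*` I3) (x, y) = 1 :> R.
    by rewrite indicE mem_set //; split => //=; rewrite /WnLib.I3 /= in_itv.
  lra.
move: Ux Uy; rewrite /unit_itv /= !in_itv /= => /andP[x0 _] /andP[y0 _].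
have [ex1 ex2 ex3] := side hn x0 (fun h => negP x3 h).
have [ey1 ey2 ey3] := side hn y0 (fun h => negP y3 h).
have E : Wn n x y = Wlim x y.
  rewrite Wn_def /Wlim !in_itv /= x0 y0 /= !andbA ex1 ex2 ey1 ey2 ex3 /=.
  by case: (x <= 2^-1); case: (y <= 2^-1).
rewrite E subrr normr0; lra.
Qed.

Lemma I3U12 : (12 <= n)%N -> I3 `<=` U.
Proof.
move=> hn12; have hn : (3 <= n)%N by apply: leq_trans hn12.
have [h1 h2 h3 h4] := basic_facts R hn; have [_ [h5 h6]] := ni_facts R hn.
have n12 : (12:R) <= n%:R by rewrite (ler_nat R 12 n).
have ni12 : ni <= 12^-1.
  have -> : (12^-1 : R) = 12^-1 * 1 by rewrite mulr1.
  rewrite -h5 ler_pdivlMl; nra.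
move=> x; rewrite /WnLib.I3 /unit_itv /= !in_itv /= /WnLib.pc /WnLib.pd => /andP[? ?].
apply/andP; split; lra.
Qed.

Lemma L1_le : (12 <= n)%N ->
  (\int[@leb2 R]_(p in U `*` U) (`|Wn n p.1 p.2 - Wlim p.1 p.2|)%:E <= (8 * ni)%:E)%E.
Proof.
move=> hn12; have hn : (3 <= n)%N by apply: leq_trans hn12.
have [h1 h2 h3 h4] := basic_facts R hn.
have I3U := I3U12 hn12.
have mA : measurable_fun setT (fun p : R * R => `|Wn n p.1 p.2 - Wlim p.1 p.2|).
  apply: (measurableT_comp (@normr_measurable R setT)).
  exact: (measurable_funB (@Wn_meas R n) (@Wlim_meas R)).
have m1 := mind_meas (@mI3 R n) (@measurableT _ R).
have m2 := mind_meas (@measurableT _ R) (@mI3 R n).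
apply: (le_trans (@int_le R U U _ (fun p => \1_(I3 `*` setT) p + \1_(setT `*` I3) p) (@mU R) (@mU R) mA
   (measurable_funD m1 m2) (fun p => normr_ge0 _) (fun p hp => diff_pt hn hp))).
rewrite (@int_add R U U (\1_(I3 `*` setT)) (\1_(setT `*` I3)) (@mU R) (@mU R) m1 m2); last 2 first.
- by move=> p; exact: ind_ge0.
- by move=> p; exact: ind_ge0.
rewrite !int_rectX //; try exact: mU; try exact: mI3.
rewrite !setIT (setIidr I3U) leb_U (muE (@mI3 R n) I3U) mul1e mule1 -EFinD lee_fin.
rewrite /WnLib.I3 mr_itv; rewrite /WnLib.pd /WnLib.pc; lra.
Qed.

End L1.
End L1Lib.
Import L1Lib.
Lemma ni_harm (R : realType) (n : nat) : (1 <= n)%N -> @ni R n <= 2 * harmonic n.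
Proof.
move=> hn; have n1 : (1 : R) <= n%:R by rewrite (ler_nat R 1 n).
rewrite /ni /harmonic /=.
have -> : (2 : R) * n.+1%:R^-1 = (n.+1%:R / 2)^-1 by rewrite invfM invrK mulrC.
have p1 : (0 : R) < n.+1%:R / 2 by rewrite divr_gt0 // ltr0Sn.
have p2 : (0 : R) < n%:R by lra.
rewrite lef_pV2 ?posrE // -natr1; lra.
Qed.

Lemma hcvg (R : realType) (K : R) : (fun n : nat => K * harmonic n) @ \oo --> (0 : R).
Proof.
have := cvgM (cvg_cst K) (@cvg_harmonic R); rewrite mulr0; exact.
Qed.

Theorem mainTheorem20 (R : realType) :
  (forall n : nat, (3 <= n)%N -> is_graphon (@Wn R n) /\ graphon_connected (@Wn R n)) /\
  is_graphon (@Wlim R) /\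
  (fun n : nat => (\int[@leb2 R]_(p in @unit_itv R `*` @unit_itv R)
                     (`|@Wn R n p.1 p.2 - Wlim p.1 p.2|)%:E)%E) @ \oo --> 0%E /\
  (fun n : nat => cheeger (@Wn R n)) @ \oo --> (0 : R) /\
  cheeger (@Wlim R) = 2^-1 /\
  ~ ((fun n : nat => cheeger (@Wn R n)) @ \oo --> cheeger (@Wlim R)).
Proof.
have UU : measurable (@unit_itv R `*` @unit_itv R) by apply: measurableX; exact: mU.
have C0 : (fun n : nat => cheeger (@Wn R n)) @ \oo --> (0 : R).
  apply: (@squeeze_cvgr _ _ _ _ (fun _ => 0) (fun n => 6 * harmonic n)); last 2 first.
  - exact: cvg_cst.
  - exact: hcvg.
  exists 12%N => // k hk; apply/andP; split.
    by apply: cheeger_ge0; [exact: Wn_ge0 | exists (@Ast R); exact: Ast_adm].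
  apply: le_trans (@cheeger_Wn_ub R k hk) _.
  have hh := @ni_harm R k (leq_trans (isT : (1 <= 12)%N) hk); lra.
split.
  move=> n hn; split; last exact: Wn_connected.
  split; [|split].
  - exact: (measurable_funS measurableT (@subsetT _ _) (@Wn_meas R n)).
  - by move=> x y _ _; exact: Wn_sym.
  - by move=> x y _ _; have [_ h] := Wn_good R n; exact: (h (x, y)).
split.
  split; [|split].
  - exact: (measurable_funS measurableT (@subsetT _ _) (@Wlim_meas R)).
  - by move=> x y _ _; exact: Wlim_sym.
  - by move=> x y _ _; have [_ h] := @Wlim_good R; exact: (h (x, y)).
split.
  apply: (@squeeze_cvge _ _ _ _ (fun _ => 0%E) _ (fun n => (16 * harmonic n)%:E)); last 2 first.
  - exact: cvg_cst.
  - apply: cvg_EFin; first by exists 0%N.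
    exact: hcvg.
  exists 12%N => // k hk; apply/andP; split.
    by apply: int_ge0 => p; exact: normr_ge0.
  apply: le_trans (@L1_le R k hk) _; rewrite lee_fin.
  have hh := @ni_harm R k (leq_trans (isT : (1 <= 12)%N) hk); lra.
split; first exact: C0.
split; first exact: cheeger_Wlim.
rewrite cheeger_Wlim => H.
have e1 := cvg_lim (@Rhausdorff R) C0.
have e2 := cvg_lim (@Rhausdorff R) H.
have : (0 : R) = 2^-1 by rewrite -e1 -e2.
lra.
Qed.
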